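(* Let $\overline{n}=(n_1,\ldots,n_r)$ with $1\le n_1\le\cdots\le n_r$. Then $\mathrm{cat}(\mathrm{P}_{\overline{n}})<(n_1+1)\,r$.
   Context: $\mathrm{P}_{\overline{n}}$ is the quotient of $S^{n_1}\times\cdots\times S^{n_r}$ by the diagonal $\mathbb{Z}_2$-action which is antipodal on each factor. $\mathrm{cat}$ denotes the reduced Lusternik–Schnirelmann category: one less than the minimal number of open sets covering the space, each contractible in the space (so a contractible space has $\mathrm{cat}=0$). *)

(* Defs.v *)
From HB Require Import structures.
From mathcomp Require Import all_boot all_order all_algebra generic_quotient.
From mathcomp Require Import all_classical all_reals all_analysis.
Import numFieldNormedType.Exports.
Unset Printing Implicit Defensive.
Import Order.TTheory GRing.Theory Num.Theory.
Local Open Scope classical_set_scope.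
Local Open Scope ring_scope.
Local Open Scope quotient_scope.

Definition usphere (R : realType) (m : nat) : set 'rV[R]_m.+1 :=
  [set x | \sum_(i < m.+1) (x ord0 i) ^+ 2 = 1].

Definition Sphere (R : realType) (m : nat) : Type :=
  set_type (usphere R m).
HB.instance Definition _ (R : realType) (m : nat) :=
  Topological.copy (Sphere R m) (set_type (usphere R m)).

Lemma usphere_opp (R : realType) (m : nat) (x : 'rV[R]_m.+1) :
  x \in usphere R m -> - x \in usphere R m.
Proof.
rewrite !inE /usphere /= => <-.
by apply: eq_bigr => i _; rewrite mxE sqrrN.
Qed.

Definition sph_antipode (R : realType) (m : nat) (x : Sphere R m) : Sphere R m :=
  exist _ (- val x) (@usphere_opp R m _ (valP x)).

(* S^{n_0} x ... x S^{n_(r-1)} with the product topology. *)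
Definition ProdSpheres (R : realType) (r : nat) (n : nat -> nat) : Type :=
  prod_topology (fun i : 'I_r => Sphere R (n i)).
HB.instance Definition _ (R : realType) (r : nat) (n : nat -> nat) :=
  Topological.copy (ProdSpheres R r n)
    (prod_topology (fun i : 'I_r => Topological.clone (Sphere R (n i)) _)).

Definition diag_antipode (R : realType) r n (x : ProdSpheres R r n) : ProdSpheres R r n :=
  fun i => @sph_antipode R (n i) (x i).

Lemma diag_antipodeK (R : realType) r n : involutive (@diag_antipode R r n).
Proof.
move=> x; apply: functional_extensionality_dep => i.
by apply: val_inj; rewrite /= opprK.
Qed.

Definition antip_rel (R : realType) r n : rel (ProdSpheres R r n) :=
  fun x y => (x == y) || (x == @diag_antipode R r n y).

Lemma antip_rel_equiv (R : realType) r n : equivalence_rel (@antip_rel R r n).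
Proof.
rewrite /antip_rel => x y z; split; first by rewrite eqxx.
set A := @diag_antipode R r n.
have K : forall u, A (A u) = u by exact: diag_antipodeK.
have E u v : (u == A v) = (A u == v).
  by apply/eqP/eqP => [->|<-]; rewrite ?K.
have I u v : (A u == A v) = (u == v).
  by apply/eqP/eqP => [/(congr1 A)|->]; rewrite ?K.
case/orP => /eqP -> //.
by rewrite -E I orbC.
Qed.

Lemma antip_rel_refl (R : realType) r n : reflexive (@antip_rel R r n).
Proof. by move=> x; case: (@antip_rel_equiv R r n x x x). Qed.

Lemma antip_rel_sym (R : realType) r n : symmetric (@antip_rel R r n).
Proof.
move=> x y; apply/idP/idP => h.
  by have [_ /(_ h) <-] := @antip_rel_equiv R r n x y x; exact: (@antip_rel_refl R r n).
by have [_ /(_ h) <-] := @antip_rel_equiv R r n y x y; exact: (@antip_rel_refl R r n).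
Qed.

Lemma antip_rel_trans (R : realType) r n : transitive (@antip_rel R r n).
Proof.
move=> y x z hxy hyz; have [_ /(_ hxy) ->] := @antip_rel_equiv R r n x y z.
exact: hyz.
Qed.

Definition antip_equiv (R : realType) r n :=
  EquivRel (@antip_rel R r n) (@antip_rel_refl R r n)
    (@antip_rel_sym R r n) (@antip_rel_trans R r n).

Definition Pn (R : realType) (r : nat) (n : nat -> nat) : Type :=
  quotient_topology {eq_quot (@antip_equiv R r n)}.
HB.instance Definition _ (R : realType) (r : nat) (n : nat -> nat) :=
  Topological.copy (Pn R r n)
    (quotient_topology {eq_quot (@antip_equiv R r n)}).

Definition contractible_in (R : realType) (Y : topologicalType) (U : set Y) : Prop :=
  exists (H : (Y * R)%type -> Y) (y0 : Y),
    {within U `*` `[0%R, 1%R], continuous H} /\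
    (forall u, U u -> H (u, 0%R) = u) /\
    (forall u, U u -> H (u, 1%R) = y0).

Definition cat_le (R : realType) (Y : topologicalType) (k : nat) : Prop :=
  exists U : 'I_k.+1 -> set Y,
    (forall i, open (U i) /\ contractible_in R Y (U i)) /\
    \bigcup_i U i = setT.

(* reduced LS category:  cat(Y) < m  iff the least such k is < m. *)
Definition cat_lt (R : realType) (Y : topologicalType) (m : nat) : Prop :=
  exists k, (k < m)%N /\ cat_le R Y k.

(* Main.v *)
Require Import Defs.
From HB Require Import structures.
From mathcomp Require Import all_boot all_order all_algebra generic_quotient.
From mathcomp Require Import all_classical all_reals all_analysis.
From mathcomp Require Import ring lra.
Import numFieldNormedType.Exports.
Import Order.TTheory GRing.Theory Num.Theory.
Local Open Scope classical_set_scope.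
Local Open Scope ring_scope.
Local Open Scope quotient_scope.

Lemma cvg_initialP (S : choiceType) (T : topologicalType) (f : S -> T)
  (Z : Type) (F : set_system Z) (FF : Filter F) (g : Z -> initial_topology f) (s : S) :
  (f \o g) @ F --> f s -> g @ F --> (s : initial_topology f).
Proof.
move=> h A; rewrite nbhsE => -[B [[C oC <-] Bs] BA].
have : nbhs (f s) C by apply: open_nbhs_nbhs; split.
move/h => FC.
have FC' : F ((f \o g) @^-1` C) := FC.
rewrite /= /nbhs /=.
apply: (@filterS _ F _ ((f \o g) @^-1` C) (g @^-1` A) _ FC') => z /= Cz.
exact: BA.
Qed.

Lemma cvg_sphere (R : realType) m (Z : Type) (F : set_system Z) (FF : Filter F)
  (g : Z -> Sphere R m) (s : Sphere R m) :
  (fun z => val (g z)) @ F --> val s -> g @ F --> s.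
Proof. move=> h. apply: (@cvg_initialP _ _ (@set_val _ (usphere R m)) _ F FF g s).
exact: h. Qed.

Lemma cvg_PS (R : realType) r n (Z : Type) (F : set_system Z) (FF : Filter F)
  (g : Z -> ProdSpheres R r n) (s : ProdSpheres R r n) :
  (forall i, (fun z => g z i) @ F --> s i) -> g @ F --> s.
Proof.
move=> h.
apply/cvg_sup => i.
exact: (@cvg_initialP _ _ (fun f : ProdSpheres R r n => f i) _ F FF g s (h i)).
Qed.

Lemma cont_val (R : realType) m : continuous (fun x : Sphere R m => val x).
Proof. exact: (@initial_continuous _ _ (@set_val _ (usphere R m))). Qed.

Lemma cont_proj (R : realType) r n (i : 'I_r) : continuous (fun x : ProdSpheres R r n => x i).
Proof. exact: (@proj_continuous _ (fun i : 'I_r => Sphere R (n i)) i). Qed.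

Definition norm2 {R : realType} {m : nat} (v : 'rV[R]_m.+1) : R := \sum_(l < m.+1) (v ord0 l) ^+ 2.

Lemma norm2_ge0 {R : realType} {m : nat} (v : 'rV[R]_m.+1) : 0 <= norm2 v.
Proof. by apply: sumr_ge0 => l _; exact: sqr_ge0. Qed.

Lemma norm2_eq0 {R : realType} {m : nat} (v : 'rV[R]_m.+1) : norm2 v = 0 -> v = 0.
Proof.
move=> /eqP; rewrite psumr_eq0 => [/allP h|l _]; last exact: sqr_ge0.
apply/matrixP => i l; rewrite (ord1 i) mxE.
by have /(_ (mem_index_enum l))/implyP/(_ isT) := h l; rewrite sqrf_eq0 => /eqP.
Qed.

Lemma norm2_coord {R : realType} {m : nat} (v : 'rV[R]_m.+1) l : (v ord0 l) ^+ 2 <= norm2 v.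
Proof.
rewrite /norm2 (bigD1 l) //= lerDl; apply: sumr_ge0 => k _; exact: sqr_ge0.
Qed.

Lemma norm2Z {R : realType} {m : nat} (c : R) (v : 'rV[R]_m.+1) : norm2 (c *: v) = c ^+ 2 * norm2 v.
Proof. by rewrite /norm2 mulr_sumr; apply: eq_bigr => l _; rewrite mxE exprMn. Qed.

Definition nv {R : realType} {m : nat} (v : 'rV[R]_m.+1) : 'rV[R]_m.+1 :=
  (Num.sqrt (norm2 v))^-1 *: v.

Lemma nv_sphere {R : realType} {m : nat} {v : 'rV[R]_m.+1} : 0 < norm2 v -> usphere R m (nv v).
Proof.
move=> h; rewrite /usphere /= -/(norm2 _) norm2Z exprVn sqr_sqrtr ?ltW //.
by rewrite mulVf // gt_eqF.
Qed.

Lemma nv_id {R : realType} {m : nat} (v : 'rV[R]_m.+1) : usphere R m v -> nv v = v.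
Proof. by rewrite /usphere /= -/(norm2 _) /nv => ->; rewrite sqrtr1 invr1 scale1r. Qed.

Lemma norm2_lerp {R : realType} {m : nat} (x q : 'rV[R]_m.+1) (t : R) :
  norm2 x = 1 -> norm2 q = 1 ->
  norm2 ((1 - t) *: x + t *: q) = (1 - 2 * t) ^+ 2 + t * (1 - t) * norm2 (x + q).
Proof.
move=> hx hq.
have e : forall l, (((1 - t) *: x + t *: q) ord0 l) ^+ 2 =
   (1 - t) ^+ 2 * (x ord0 l) ^+ 2 + t ^+ 2 * (q ord0 l) ^+ 2 +
   t * (1 - t) * (((x + q) ord0 l) ^+ 2 - (x ord0 l) ^+ 2 - (q ord0 l) ^+ 2).
  by move=> l; rewrite !mxE; ring.
rewrite /norm2 (eq_bigr _ (fun l _ => e l)) !big_split /= -!mulr_sumr !sumrB.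
rewrite -!/(norm2 _) hx hq; ring.
Qed.

Lemma lerp_pos {R : realType} {m : nat} (x q : 'rV[R]_m.+1) (t : R) :
  norm2 x = 1 -> norm2 q = 1 -> 0 < norm2 (x + q) -> 0 <= t <= 1 ->
  0 < norm2 ((1 - t) *: x + t *: q).
Proof.
move=> hx hq hp /andP[t0 t1]; rewrite norm2_lerp //.
have [->|tn0] := eqVneq t 0.
  by rewrite mulr0 subr0 expr1n !mul0r addr0.
have [->|tn1] := eqVneq t 1.
  by rewrite subrr mulr0 mul0r addr0; lra.
apply: ltr_pwDr; last by rewrite sqr_ge0.
apply: mulr_gt0 => //; apply: mulr_gt0.
  by rewrite lt_neqAle eq_sym tn0 t0.
by rewrite subr_gt0 lt_neqAle tn1 t1.
Qed.

Lemma cvg_bigsum {R : realType} (I : Type) (s : seq I) (Z : Type) (F : set_system Z) (FF : Filter F)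
  (f : I -> Z -> R) (a : I -> R) :
  (forall i, f i @ F --> a i) -> (fun z => \sum_(i <- s) f i z) @ F --> \sum_(i <- s) a i.
Proof.
move=> h; elim: s => [|x s IH].
  rewrite big_nil; under eq_fun do rewrite big_nil; exact: cvg_cst.
rewrite big_cons; under eq_fun do rewrite big_cons.
exact: cvgD.
Qed.

Lemma cvg_bigprod {R : realType} (I : Type) (s : seq I) (Z : Type) (F : set_system Z) (FF : Filter F)
  (f : I -> Z -> R) (a : I -> R) :
  (forall i, f i @ F --> a i) -> (fun z => \prod_(i <- s) f i z) @ F --> \prod_(i <- s) a i.
Proof.
move=> h; elim: s => [|x s IH].
  rewrite big_nil; under eq_fun do rewrite big_nil; exact: cvg_cst.
rewrite big_cons; under eq_fun do rewrite big_cons.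
exact: cvgM.
Qed.

Lemma norm2_continuous {R : realType} {m : nat} : continuous (@norm2 R m).
Proof.
move=> v; apply: (@cvg_bigsum R _ _ _ (nbhs v) _ (fun l w => w ord0 l ^+ 2)) => l.
rewrite expr2; apply: cvgM; exact: (@coord_continuous R 1 m.+1 ord0 l).
Qed.

Lemma nv_continuous {R : realType} {m : nat} {v : 'rV[R]_m.+1} :
  0 < norm2 v -> {for v, continuous (@nv R m)}.
Proof.
move=> hv.
have h1 : {for v, continuous (fun w : 'rV[R]_m.+1 => (Num.sqrt (norm2 w))^-1)}.
  apply: (@continuousV _ _ (fun w : 'rV[R]_m.+1 => Num.sqrt (norm2 w))).
    by rewrite sqrtr_eq0 -ltNge.
  apply: continuous_comp; first exact: norm2_continuous.
  exact: sqrt_continuous.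
exact: (@cvgZ R _ _ (nbhs v) _ _ (fun w => w) _ _ h1 cvg_id).
Qed.

Definition sph_of {R : realType} {m : nat} (q : Sphere R m) (v : 'rV[R]_m.+1) : Sphere R m :=
  insubd q (nv v).

Lemma sph_ofE {R : realType} {m : nat} (q : Sphere R m) {v : 'rV[R]_m.+1} :
  0 < norm2 v -> val (sph_of q v) = nv v.
Proof. by move=> h; rewrite val_insubd; move: (nv_sphere h); rewrite -in_setE => ->. Qed.

Lemma sph_of_continuous {R : realType} {m : nat} (q : Sphere R m) (Z : topologicalType)
  (w : Z -> 'rV[R]_m.+1) (z0 : Z) :
  {for z0, continuous w} -> 0 < norm2 (w z0) ->
  {for z0, continuous (fun z => sph_of q (w z))}.
Proof.
move=> cw hw.
apply: (@cvg_sphere R m Z (nbhs z0) _ (fun z => sph_of q (w z)) (sph_of q (w z0))).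
rewrite (sph_ofE q hw).
have cn : {for z0, continuous (norm2 \o w)}.
  exact: (continuous_comp cw (norm2_continuous (w z0))).
have ev : \forall z \near z0, 0 < norm2 (w z).
  have hA : nbhs (norm2 (w z0)) [set y : R | 0 < y].
    by apply: open_nbhs_nbhs; split => //; exact: open_gt.
  exact: (cn _ hA).
have e2 : {near nbhs z0, (fun z => nv (w z)) =1 (fun z => \val (sph_of q (w z)))}.
  by apply: filterS ev => z hz; rewrite sph_ofE.
apply: cvg_trans; first exact: (near_eq_cvg e2).
exact: (continuous_comp cw (nv_continuous hw)).
Qed.

Lemma sph_unit {R : realType} {m : nat} (z : Sphere R m) : norm2 (val z) = 1.
Proof. by have := valP z; rewrite in_setE. Qed.

Definition Ghom {R : realType} {r : nat} {n : nat -> nat} (q : ProdSpheres R r n)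
  (p : (ProdSpheres R r n * R)%type) : ProdSpheres R r n :=
  fun i => sph_of (q i) ((1 - p.2) *: val (p.1 i) + p.2 *: val (q i)).

Definition okq {R : realType} {r : nat} {n : nat -> nat} (q x : ProdSpheres R r n) :=
  forall i, 0 < norm2 (val (x i) + val (q i)).

Lemma Ghom_cont {R : realType} {r : nat} {n : nat -> nat} (q x : ProdSpheres R r n) (t : R) :
  okq q x -> 0 <= t <= 1 -> {for (x, t), continuous (Ghom q)}.
Proof.
move=> ok t01.
apply: (@cvg_PS R r n _ (nbhs (x, t)) _ (Ghom q) (Ghom q (x, t))) => i.
apply: (@sph_of_continuous R (n i) (q i) _
   (fun p : (ProdSpheres R r n * R)%type => (1 - p.2) *: val (p.1 i) + p.2 *: val (q i)) (x, t)).
  have c1 : {for (x, t), continuous (fun p : (ProdSpheres R r n * R)%type => p.2)}.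
    exact: cvg_snd.
  have c2 : {for (x, t), continuous (fun p : (ProdSpheres R r n * R)%type => val (p.1 i))}.
    apply: (@continuous_comp _ _ _ (fun p : (ProdSpheres R r n * R)%type => p.1)
                 (fun y : ProdSpheres R r n => val (y i))); first exact: cvg_fst.
    apply: (@continuous_comp _ _ _ (fun y : ProdSpheres R r n => y i) (fun s => val s)).
      exact: cont_proj.
    exact: cont_val.
  apply: cvgD; apply: cvgZ => //; [apply: cvgB => //; exact: cvg_cst|exact: cvg_cst].
by apply: lerp_pos => //; rewrite sph_unit.
Qed.

Lemma Ghom0 {R : realType} {r : nat} {n : nat -> nat} (q x : ProdSpheres R r n) :
  Ghom q (x, 0) = x.
Proof.
apply: functional_extensionality_dep => i; apply: val_inj => /=.
rewrite /Ghom /= subr0 scale1r scale0r addr0 sph_ofE ?sph_unit ?ltr01 // nv_id //.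
by rewrite /usphere /= -/(norm2 _) sph_unit.
Qed.

Lemma Ghom1 {R : realType} {r : nat} {n : nat -> nat} (q x : ProdSpheres R r n) :
  Ghom q (x, 1) = q.
Proof.
apply: functional_extensionality_dep => i; apply: val_inj => /=.
rewrite /Ghom /= subrr scale0r add0r scale1r sph_ofE ?sph_unit ?ltr01 // nv_id //.
by rewrite /usphere /= -/(norm2 _) sph_unit.
Qed.

Notation PI R r n := (\pi_(Pn R r n) : ProdSpheres R r n -> Pn R r n).

Lemma pi_eqP {R : realType} {r : nat} {n : nat -> nat} (x y : ProdSpheres R r n) :
  PI R r n x = PI R r n y -> x = y \/ x = @diag_antipode R r n y.
Proof.
move=> h.
have : @antip_rel R r n x y.
  apply/(@eqmodP _ (antip_equiv R r n)); exact: h.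
by case/orP => /eqP ->; [left|right].
Qed.

Lemma pi_A {R : realType} {r : nat} {n : nat -> nat} (x : ProdSpheres R r n) :
  PI R r n (@diag_antipode R r n x) = PI R r n x.
Proof.
apply/(@eqmodP _ (antip_equiv R r n)); rewrite /= /antip_rel.
by apply/orP; right.
Qed.

Lemma A_cont {R : realType} {r : nat} {n : nat -> nat} : continuous (@diag_antipode R r n).
Proof.
move=> x.
apply: (@cvg_PS R r n _ (nbhs x) _ (@diag_antipode R r n) (@diag_antipode R r n x)) => i.
apply: (@cvg_sphere R (n i) _ (nbhs x) _ (fun z : ProdSpheres R r n => @diag_antipode R r n z i)).
apply: cvgN.
apply: (@continuous_comp _ _ _ (fun y : ProdSpheres R r n => y i) (fun s => val s)).
  exact: cont_proj.
exact: cont_val.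
Qed.

Lemma AK {R : realType} {r : nat} {n : nat -> nat} (x : ProdSpheres R r n) :
  @diag_antipode R r n (@diag_antipode R r n x) = x.
Proof. exact: diag_antipodeK. Qed.

Lemma pi_open {R : realType} {r : nat} {n : nat -> nat} (V : set (ProdSpheres R r n)) :
  open V -> open (PI R r n @` V).
Proof.
move=> oV.
suff : open (PI R r n @^-1` (PI R r n @` V)) by [].
have -> : PI R r n @^-1` (PI R r n @` V) = V `|` (@diag_antipode R r n) @^-1` V.
  apply/seteqP; split => z /=.
    case=> v Vv /esym /pi_eqP [->|->]; first by left.
    by right; rewrite AK.
  case=> [Vz|Vz]; first by exists z.
  by exists (@diag_antipode R r n z) => //; rewrite pi_A.
apply: openU => //.
by move/continuousP: (@A_cont R r n); apply.
Qed.

Definition crd {R : realType} {r : nat} {n : nat -> nat} (hr : (0 < r)%N)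
  (j : 'I_(n 0%N).+1) (x : ProdSpheres R r n) : R :=
  val (x (Ordinal hr)) ord0 j.

Lemma crdA {R : realType} {r : nat} {n : nat -> nat} (hr : (0 < r)%N) j (x : ProdSpheres R r n) :
  crd hr j (@diag_antipode R r n x) = - crd hr j x.
Proof. by rewrite /crd /= mxE. Qed.

Lemma crd_cont {R : realType} {r : nat} {n : nat -> nat} (hr : (0 < r)%N) j :
  continuous (@crd R r n hr j).
Proof.
move=> x.
apply: (@continuous_comp _ _ _ (fun y : ProdSpheres R r n => y (Ordinal hr)) (fun s => val s ord0 j)).
  exact: cont_proj.
apply: (@continuous_comp _ _ _ (fun s : Sphere R (n 0%N) => val s) (fun v : 'rV[R]_(n 0%N).+1 => v ord0 j)).
  exact: cont_val.
exact: (@coord_continuous R 1 (n 0%N).+1 ord0 j).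
Qed.

Definition sec {R : realType} {r : nat} {n : nat -> nat} (hr : (0 < r)%N)
  (j : 'I_(n 0%N).+1) (y : Pn R r n) : ProdSpheres R r n :=
  if 0 < crd hr j (repr y) then repr y else @diag_antipode R r n (repr y).

Lemma pi_sec {R : realType} {r : nat} {n : nat -> nat} (hr : (0 < r)%N) j (y : Pn R r n) :
  PI R r n (sec hr j y) = y.
Proof. by rewrite /sec; case: ifP => _; rewrite ?pi_A reprK. Qed.

Lemma sec_pi {R : realType} {r : nat} {n : nat -> nat} (hr : (0 < r)%N) j (x : ProdSpheres R r n) :
  0 < crd hr j x -> sec hr j (PI R r n x) = x.
Proof.
move=> hx; rewrite /sec.
have [->|->] := pi_eqP _ _ (reprK (PI R r n x)); first by rewrite hx.
by rewrite crdA AK oppr_gt0 ltNge (ltW hx).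
Qed.

Lemma sec_pos {R : realType} {r : nat} {n : nat -> nat} (hr : (0 < r)%N) j (y : Pn R r n) :
  crd hr j (repr y) != 0 -> 0 < crd hr j (sec hr j y).
Proof.
move=> h; rewrite /sec; case: ifP => // /negbT; rewrite crdA -leNgt => h2.
by rewrite oppr_gt0 lt_neqAle h h2.
Qed.

Lemma sec_cont {R : realType} {r : nat} {n : nat -> nat} (hr : (0 < r)%N) j (y : Pn R r n) :
  0 < crd hr j (sec hr j y) -> {for y, continuous (sec hr j)}.
Proof.
move=> hp W; rewrite nbhsE => -[B [oB Bs] BW].
set V' := B `&` [set x | 0 < crd hr j x].
have oV' : open V'.
  apply: openI => //.
  exact: (proj1 (continuousP _) (@crd_cont R r n hr j) _ (@open_gt R 0)).
have oO := pi_open _ oV'.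
have hO : nbhs y (PI R r n @` V').
  apply: open_nbhs_nbhs; split => //.
  by exists (sec hr j y); [split|rewrite pi_sec].
apply: (filterS _ hO) => z [v [Bv pv] <-] /=.
by rewrite sec_pi //; apply: BW.
Qed.

Definition Pos {R : realType} {r : nat} {n : nat -> nat} (hr : (0 < r)%N) j
  (q : ProdSpheres R r n) : set (ProdSpheres R r n) :=
  [set x | 0 < crd hr j x /\ okq q x].

Definition Ujq {R : realType} {r : nat} {n : nat -> nat} (hr : (0 < r)%N) j
  (q : ProdSpheres R r n) : set (Pn R r n) :=
  [set y | Pos hr j q (sec hr j y)].

Lemma okq_open {R : realType} {r : nat} {n : nat -> nat} (q : ProdSpheres R r n) :
  open [set x | okq q x].
Proof.
have -> : [set x | okq q x] =
   (fun x : ProdSpheres R r n => \prod_(i < r) norm2 (val (x i) + val (q i))) @^-1` [set y | 0 < y].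
  apply/seteqP; split => x /=.
    by move=> h; apply: prodr_gt0 => i _; exact: h.
  move=> h i; rewrite lt_neqAle norm2_ge0 andbT; apply/eqP => h0.
  by move: h; rewrite (bigD1 i) //= -h0 mul0r ltxx.
apply: (proj1 (continuousP _) _ _ (@open_gt R 0)) => x.
apply: (@cvg_bigprod R _ _ _ (nbhs x) _
   (fun i (z : ProdSpheres R r n) => norm2 (val (z i) + val (q i)))) => i.
apply: (@continuous_comp _ _ _ (fun z : ProdSpheres R r n => val (z i) + val (q i)) norm2).
  apply: (@cvgD _ _ _ (nbhs x) _ (fun z : ProdSpheres R r n => val (z i)) (fun _ => val (q i))); last exact: cvg_cst.
  apply: (@continuous_comp _ _ _ (fun y : ProdSpheres R r n => y i) (fun s => val s)).
    exact: cont_proj.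
  exact: cont_val.
exact: norm2_continuous.
Qed.

Lemma Pos_open {R : realType} {r : nat} {n : nat -> nat} (hr : (0 < r)%N) j
  (q : ProdSpheres R r n) : open (Pos hr j q).
Proof.
apply: openI; last exact: okq_open.
exact: (proj1 (continuousP _) (@crd_cont R r n hr j) _ (@open_gt R 0)).
Qed.

Lemma Ujq_open {R : realType} {r : nat} {n : nat -> nat} (hr : (0 < r)%N) j
  (q : ProdSpheres R r n) : open (Ujq hr j q).
Proof.
suff : open (PI R r n @^-1` (Ujq hr j q)) by [].
have -> : PI R r n @^-1` (Ujq hr j q) =
    Pos hr j q `|` (@diag_antipode R r n) @^-1` (Pos hr j q).
  apply/seteqP; split => x /=.
    rewrite /Ujq /=.
    have [->|->] := pi_eqP _ _ (pi_sec hr j (PI R r n x)); first by left.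
    by right.
  case=> h; rewrite /Ujq /=.
    by rewrite sec_pi //; case: h.
  by rewrite -pi_A sec_pi //; case: h.
apply: openU; first exact: Pos_open.
exact: (proj1 (continuousP _) (@A_cont R r n) _ (Pos_open hr j q)).
Qed.

Lemma Ujq_contr {R : realType} {r : nat} {n : nat -> nat} (hr : (0 < r)%N) j
  (q : ProdSpheres R r n) : contractible_in R (Pn R r n) (Ujq hr j q).
Proof.
exists (fun p : (Pn R r n * R)%type => PI R r n (Ghom q (sec hr j p.1, p.2))), (PI R r n q).
split; last split.
- apply: continuous_in_subspaceT => -[y t]; rewrite inE => -[Uy /= t01].
  have [h1 h2] := Uy.
  have cp : {for (y, t), continuous (fun p : (Pn R r n * R)%type => (sec hr j p.1, p.2))}.
    apply: (@cvg_pair _ _ _ (nbhs (y, t)) (nbhs (sec hr j y)) (nbhs t) _ _ _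
      (fun p : (Pn R r n * R)%type => sec hr j p.1) (fun p : (Pn R r n * R)%type => p.2)); last exact: cvg_snd.
    have cf : {for (y, t), continuous (fun p : (Pn R r n * R)%type => p.1)} by exact: cvg_fst.
    have := continuous_comp cf (sec_cont hr j y h1).
    exact.
  have t01' : 0 <= t <= 1 by move: t01; rewrite /= in_itv /=.
  have cg := continuous_comp (Ghom_cont q _ _ h2 t01') (@pi_continuous _ {eq_quot (@antip_equiv R r n)} _).
  have := continuous_comp cp cg.
  exact.
- by move=> u _ /=; rewrite Ghom0 pi_sec.
- by move=> u _ /=; rewrite Ghom1.
Qed.

Definition bvec {R : realType} (m j : nat) : 'rV[R]_m.+1 := \row_l (((l : nat) == j)%:R).

Lemma bvec_sphere {R : realType} (m j : nat) : (j <= m)%N -> usphere R m (bvec m j).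
Proof.
move=> hj; rewrite /usphere /= (bigD1 (Ordinal (hj : (j < m.+1)%N))) //= big1.
  by rewrite mxE eqxx expr1n addr0.
move=> l hl; rewrite mxE.
have -> : ((l : nat) == j) = false.
  by apply/negbTE; apply: contra hl => /eqP e; apply/eqP/val_inj.
by rewrite expr0n.
Qed.

Definition ck {R : realType} (r k : nat) : R := k%:R / r%:R.

Definition avec {R : realType} (m r k : nat) : 'rV[R]_m.+1 :=
  \row_l (if (l : nat) == 0%N then ck r k
          else if (l : nat) == 1%N then Num.sqrt (1 - ck r k ^+ 2) else 0).

Lemma ck01 {R : realType} (r k : nat) : (k < r)%N -> 0 <= ck r k :> R /\ ck r k <= 1 :> R.
Proof.
move=> hk; have r0 : (0 < r%:R :> R) by rewrite ltr0n; apply: leq_ltn_trans hk.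
split; first by rewrite /ck divr_ge0.
by rewrite /ck ler_pdivrMr // mul1r ler_nat ltnW.
Qed.

Lemma avec_sphere {R : realType} (m r k : nat) : (1 <= m)%N -> (k < r)%N ->
  usphere R m (avec m r k).
Proof.
case: m => // m _ hk; have [c0 c1] := @ck01 R r k hk.
rewrite /usphere /= big_ord_recl big_ord_recl big1 => [|i _]; last first.
  by rewrite mxE /= expr0n.
rewrite !mxE /= addr0 sqr_sqrtr; first by rewrite addrC subrK.
by rewrite subr_ge0; nra.
Qed.

Definition ptS {R : realType} (m : nat) : Sphere R m :=
  exist _ (bvec m 0) (mem_set (bvec_sphere m 0 (leq0n m))).

Definition qpt {R : realType} {r : nat} {n : nat -> nat} (j k : nat) : ProdSpheres R r n :=
  fun i => insubd (ptS (n i)) (if (i : nat) == 0%N then bvec (n i) j else avec (n i) r k).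

Lemma qpt0 {R : realType} {r : nat} {n : nat -> nat} (j k : nat) (i : 'I_r) :
  (i : nat) = 0%N -> (j <= n i)%N -> val (@qpt R r n j k i) = bvec (n i) j.
Proof.
move=> /eqP i0 hj; rewrite /qpt val_insubd i0.
by rewrite (mem_set (bvec_sphere _ _ hj)).
Qed.

Lemma qptS {R : realType} {r : nat} {n : nat -> nat} (j k : nat) (i : 'I_r) :
  (i : nat) != 0%N -> (1 <= n i)%N -> (k < r)%N -> val (@qpt R r n j k i) = avec (n i) r k.
Proof.
move=> i0 h1 hk; rewrite /qpt val_insubd (negbTE i0).
by rewrite (mem_set (avec_sphere _ _ _ h1 hk)).
Qed.

Lemma cover_pt {R : realType} {r : nat} {n : nat -> nat} (hr : (0 < r)%N)
  (hn_pos : forall i, (i < r)%N -> (1 <= n i)%N) (y : Pn R r n) :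
  exists (j : 'I_(n 0%N).+1) (k : 'I_r), Ujq hr j (@qpt R r n j k) y.
Proof.
set x0 := repr y.
have [j hj] : exists j : 'I_(n 0%N).+1, crd hr j x0 != 0.
  apply/not_existsP => hno.
  have := sph_unit (x0 (Ordinal hr)); rewrite /norm2 big1 => [/esym/eqP|l _].
    by rewrite oner_eq0.
  have [h0|hne] := eqVneq (crd hr l x0) 0; last by exfalso; apply: (hno l); rewrite hne.
  by move: h0; rewrite /crd => ->; rewrite expr0n.
exists j.
set x := sec hr j y.
have hx : 0 < crd hr j x by exact: sec_pos.
have e0ok : forall (k : nat) (i : 'I_r), (i : nat) = 0%N ->
    0 < norm2 (val (x i) + val (@qpt R r n j k i)).
  move=> k i i0; have -> : i = Ordinal hr by apply: val_inj.
  rewrite qpt0 //; last by rewrite -ltnS.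
  apply: (lt_le_trans _ (norm2_coord _ j)).
  rewrite !mxE eqxx /=.
  apply: exprn_gt0; apply: ltr_wpDr hx; exact: ler01.
apply/not_existsP => hno.
have hbad : forall k : 'I_r, exists i : 'I_r,
    (i : nat) != 0%N /\ val (x i) ord0 ord0 = - ck r k.
  move=> k.
  have : ~ okq (@qpt R r n j k) x by move=> ok; apply: (hno k); split.
  move/existsNP => [i hi]; exists i.
  have i0 : (i : nat) != 0%N by apply/eqP => i0; apply: hi; exact: e0ok.
  split => //.
  have hz : norm2 (val (x i) + val (@qpt R r n j k i)) = 0.
    by apply/eqP; rewrite eq_le norm2_ge0 andbT leNgt; apply/negP.
  move/norm2_eq0: hz => /matrixP /(_ ord0 ord0).
  rewrite qptS // ?hn_pos // !mxE /= => /eqP; rewrite addr_eq0 => /eqP ->.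
  by [].
have [f hf] := choice hbad.
have finj : injective f.
  move=> k1 k2 e; have [_ e1] := hf k1; have [_ e2] := hf k2.
  move: e1; rewrite e e2 => /eqP; rewrite eqr_opp /ck.
  have r0 : (r%:R : R) != 0 by rewrite pnatr_eq0 -lt0n.
  rewrite (can2_eq (mulfVK r0) (mulfK r0)) mulfVK // eqr_nat => /eqP ek.
  exact: val_inj.
have /codomP [k fk] := injF_onto finj (Ordinal hr).
by have [] := hf k; rewrite -fk eqxx.
Qed.

Theorem mainTheorem13 (R : realType) (r : nat) (n : nat -> nat)
  (hr : (0 < r)%N)
  (hn_pos : forall i, (i < r)%N -> (1 <= n i)%N)
  (hn_mono : forall i j, (i <= j)%N -> (j < r)%N -> (n i <= n j)%N) :
  cat_lt R (Pn R r n) ((n 0%N).+1 * r)%N.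
Proof.
have hpos : (0 < (n 0%N).+1 * r)%N by rewrite muln_gt0.
exists ((n 0%N).+1 * r).-1; split; first by rewrite prednK.
pose U (l : 'I_(((n 0%N).+1 * r).-1).+1) : set (Pn R r n) :=
  Ujq hr (inord (l %/ r) : 'I_(n 0%N).+1) (@qpt R r n (inord (l %/ r) : 'I_(n 0%N).+1) (l %% r)).
exists U; split.
  by move=> l; split; [exact: Ujq_open|exact: Ujq_contr].
apply/seteqP; split => // y _.
have [j [k hy]] := cover_pt hr hn_pos y.
have hl : (j * r + k < (((n 0%N).+1 * r).-1).+1)%N.
  rewrite prednK //.
  apply: (@leq_trans ((j.+1) * r)); first by rewrite mulSn addnC ltn_add2r.
  by rewrite leq_mul2r ltn_ord orbT.
exists (Ordinal hl) => //.
rewrite /U /= divnMDl // modnMDl modn_small // divn_small // addn0.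
by rewrite inord_val.
Qed.
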